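(* Let $(X,d)$ be a complete $\mathrm{CAT}(0)$-space, $\Omega\subset X$ a bounded set satisfying Condition (TB) with constant $\mathbf m$, and $\varepsilon:=(6\mathbf m)^{-1}$. Let $\xi:[0,\ell)\to X$ be a self-contracted curve with $\xi([0,\ell))\subset\Omega$. Fix $\tau\in[0,\ell)$ and let $\bar\gamma_\tau\in\Sigma_{\xi(\tau)}X$ satisfy $\angle_{\xi(\tau)}(\bar\gamma_\tau,\gamma_{\xi(\tau)\xi(t)})\le\arccos(3\varepsilon)$ for all $t\in(\tau,\ell)$ with $\xi(t)\ne\xi(\tau)$ (such $\bar\gamma_\tau$ exists). For $\sigma>0$ let $$\Omega_{\tau,\sigma}:=\{x\in X:\ 0<d(\xi(\tau),x)<\sigma,\ \angle_{\xi(\tau)}(\gamma_{\xi(\tau)x},\bar\gamma_\tau)\ge\pi-2\arcsin(\varepsilon/2)\},$$ and for $x\in\Omega_{\tau,\sigma}$ let $V_x:=\gamma_{x\xi(\tau)}\in\Sigma_xX$. Then for all $T\in(\tau,\ell)$, $x\in\Omega_{\tau,\sigma}$ and $\gamma\in\Sigma_xX$ with $\angle_x(V_x,\gamma)\le2\arcsin(\varepsilon/2)$, $$\big|\Pi_\gamma(\Xi(T))\big|\le\big|\Pi_\gamma(\Xi(\tau))\big|-\frac{\varepsilon}{2}\,d\big(\xi(\tau),\xi(T)\big).$$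
   Context: A geodesic metric space $(X,d)$ is a $\mathrm{CAT}(0)$-space if for all $x,y,z\in X$ and every minimal geodesic $\gamma$ from $y$ to $z$, $d^2(x,\gamma(s))\le(1-s)d^2(x,y)+sd^2(x,z)-(1-s)sd^2(y,z)$ for all $s\in[0,1]$; minimal geodesics are unique, denoted $\gamma_{xy}$. For geodesics $\gamma,\eta$ from $x$, $\angle_x(\gamma,\eta):=\lim_{s,t\to0}\tilde\angle[\gamma(s)x\eta(t)]$ with $\cos\tilde\angle[yxz]=\frac{d^2(x,y)+d^2(x,z)-d^2(y,z)}{2d(x,y)d(x,z)}$. The space of directions $\Sigma_xX$ is the completion, with respect to $\angle_x$, of $\{\gamma_{xy}:y\ne x\}$ modulo $\angle_x=0$. The tangent cone $C_xX$ is the Euclidean cone $(\Sigma_xX\times[0,\infty))/(\Sigma_xX\times\{0\})$ with origin $o_x$ and metric $d_x((\gamma,s),(\eta,t))=\sqrt{s^2+t^2-2st\cos\angle_x(\gamma,\eta)}$. Define $\log_x:X\to C_xX$, $\log_x(y)=(\gamma_{xy},d(x,y))$ ($\log_x(x)=o_x$); for $\gamma\in\Sigma_xX$, $P_\gamma:C_xX\to\mathbb{R}$, $P_\gamma((\eta,s))=s\cos\angle_x(\gamma,\eta)$, $P_\gamma(o_x)=0$; for $\Xi\subset X$, $\Pi_\gamma(\Xi)$ is the smallest closed interval containing $P_\gamma(\log_x(\Xi))$, and $|\cdot|$ is Lebesgue measure. Condition (TB) on $\Omega$ with constant $\mathbf m$: for every $x\in\Omega$, every subset $\Delta\subset\Sigma_xX$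 with $\angle_x(\gamma,\eta)\ge\pi/3$ for all distinct $\gamma,\eta\in\Delta$ has cardinality at most $\mathbf m$. A map $\xi:[0,\ell)\to X$ (not necessarily continuous) is self-contracted if $d(\xi(t_2),\xi(t_3))\le d(\xi(t_1),\xi(t_3))$ for all $0\le t_1\le t_2\le t_3<\ell$; $\Xi(t):=\xi([t,\ell))$. *)

(* Defs.v *)
From Stdlib Require Import Reals Lra ClassicalEpsilon.
Open Scope R_scope.
Set Implicit Arguments.

Section Defs.
Variable X : Type.
Variable d : X -> X -> R.

Definition is_metric : Prop :=
  (forall x y, 0 <= d x y) /\ (forall x y, d x y = 0 <-> x = y) /\
  (forall x y, d x y = d y x) /\ (forall x y z, d x z <= d x y + d y z).

Definition min_geodesic (g : R -> X) (y z : X) : Prop :=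
  g 0 = y /\ g 1 = z /\
  forall s t, 0 <= s <= 1 -> 0 <= t <= 1 -> d (g s) (g t) = Rabs (s - t) * d y z.

Definition is_geodesic_space : Prop :=
  forall y z, exists g, min_geodesic g y z.

Definition CAT0_ineq : Prop :=
  forall x y z g, min_geodesic g y z -> forall s, 0 <= s <= 1 ->
    (d x (g s))^2 <= (1 - s) * (d x y)^2 + s * (d x z)^2 - (1 - s) * s * (d y z)^2.

Definition complete_space : Prop :=
  forall u : nat -> X,
    (forall e, 0 < e -> exists N, forall n m, (n >= N)%nat -> (m >= N)%nat -> d (u n) (u m) < e) ->
    exists l, forall e, 0 < e -> exists N, forall n, (n >= N)%nat -> d (u n) l < e.

Definition complete_CAT0 : Prop :=
  is_metric /\ is_geodesic_space /\ CAT0_ineq /\ complete_space.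

Definition comp_angle (y x z : X) : R :=
  acos (((d x y)^2 + (d x z)^2 - (d y z)^2) / (2 * d x y * d x z)).

(* p lies on the (unique) minimal geodesic from x to y *)
Definition on_segment (x y p : X) : Prop := d x p + d p y = d x y.

(* A is the Alexandrov angle at x between gamma_{xy} and gamma_{xz}:
   the limit of comp_angle[gamma_{xy}(s) x gamma_{xz}(t)] as s,t -> 0+ *)
Definition angle_limit (x y z : X) (A : R) : Prop :=
  forall e, 0 < e -> exists delta, 0 < delta /\
    forall p q, on_segment x y p -> on_segment x z q ->
      0 < d x p < delta -> 0 < d x q < delta ->
      Rabs (comp_angle p x q - A) < e.

Definition gangle (x y z : X) : R :=
  epsilon (inhabits 0) (fun A => angle_limit x y z A).

(* Elements of Sigma_x X: the completion of {gamma_{xy} : y <> x} w.r.t.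
   the angle; represented by angle-Cauchy sequences of points y_n <> x
   (the direction gamma_{xy} is the constant sequence fun _ => y). *)
Definition is_dir (x : X) (U : nat -> X) : Prop :=
  (forall n, U n <> x) /\
  forall e, 0 < e -> exists N, forall n m, (n >= N)%nat -> (m >= N)%nat ->
    gangle x (U n) (U m) < e.

(* angle in Sigma_x X between two directions (extension by continuity) *)
Definition dangle (x : X) (U V : nat -> X) : R :=
  epsilon (inhabits 0) (fun A => Un_cv (fun n => gangle x (U n) (V n)) A).

Definition Pproj (x : X) (U : nat -> X) (y : X) : R :=
  match excluded_middle_informative (y = x) with
  | left _ => 0
  | right _ => d x y * cos (dangle x U (fun _ => y))
  end.

End Defs.

Definition Rsup (S : R -> Prop) : R := epsilon (inhabits 0) (fun m => is_lub S m).
Definition Rinf (S : R -> Prop) : R := - Rsup (fun r => S (- r)).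

(* Lebesgue measure of the smallest closed interval containing S (S nonempty bounded) *)
Definition hull_length (S : R -> Prop) : R := Rsup S - Rinf S.

Definition Pi_length {X} (d : X -> X -> R) (x : X) (U : nat -> X) (Xi : X -> Prop) : R :=
  hull_length (fun r => exists y, Xi y /\ r = Pproj d x U y).

Definition cond_TB {X} (d : X -> X -> R) (Omega : X -> Prop) (m : nat) : Prop :=
  forall x, Omega x -> forall (n : nat) (D : nat -> nat -> X),
    (forall i, (i < n)%nat -> is_dir d x (D i)) ->
    (forall i j, (i < n)%nat -> (j < n)%nat -> i <> j -> dangle d x (D i) (D j) >= PI / 3) ->
    (n <= m)%nat.

Definition bounded_set {X} (d : X -> X -> R) (Omega : X -> Prop) : Prop :=
  exists B, forall x y, Omega x -> Omega y -> d x y <= B.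

(* domain [0, l); l = None means l = +infinity *)
Definition in_dom (l : option R) (t : R) : Prop :=
  0 <= t /\ match l with Some l => t < l | None => True end.

Definition self_contracted {X} (d : X -> X -> R) (l : option R) (xi : R -> X) : Prop :=
  forall t1 t2 t3, in_dom l t1 -> in_dom l t3 -> t1 <= t2 <= t3 ->
    d (xi t2) (xi t3) <= d (xi t1) (xi t3).

Definition Xi_set {X} (l : option R) (xi : R -> X) (t : R) : X -> Prop :=
  fun y => exists s, t <= s /\ in_dom l s /\ y = xi s.

(* Main.v *)
Require Import Defs.
From Stdlib Require Import Reals.
From Stdlib Require Import Lra Lia Psatz ClassicalEpsilon Classical.
Open Scope R_scope.

Lemma acos_anti : forall u v, -1 <= u <= 1 -> -1 <= v <= 1 -> u <= v -> acos v <= acos u.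
Proof.
  intros u v Hu Hv Huv.
  destruct (Rle_or_lt (acos v) (acos u)) as [H|H]; auto.
  pose proof (acos_bound u); pose proof (acos_bound v).
  pose proof (cos_decreasing_1 (acos u) (acos v) ltac:(lra) ltac:(lra) ltac:(lra) ltac:(lra) H).
  rewrite !cos_acos in H2 by lra. lra.
Qed.

Lemma cos_anti : forall u v, 0 <= u -> u <= v -> v <= PI -> cos v <= cos u.
Proof.
  intros u v H1 H2 H3. destruct (Req_dec u v) as [->|Hne]; [lra|].
  left; apply cos_decreasing_1; lra.
Qed.

Lemma ratio_unit : forall N M, 0 < M -> -M <= N <= M -> -1 <= N / M <= 1.
Proof.
  intros N M HM [H1 H2]. split.
  - apply (Rmult_le_reg_r M); auto. unfold Rdiv. rewrite Rmult_assoc, Rinv_l by lra. lra.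
  - apply (Rmult_le_reg_r M); auto. unfold Rdiv. rewrite Rmult_assoc, Rinv_l by lra. lra.
Qed.

Lemma asin_nonneg : forall u, 0 <= u <= 1 -> 0 <= asin u.
Proof.
  intros u Hu. destruct (Rle_or_lt 0 (asin u)) as [H|H]; auto.
  pose proof (asin_bound u).
  pose proof (sin_increasing_1 (asin u) 0 ltac:(lra) ltac:(lra) ltac:(pose proof PI_RGT_0; lra) ltac:(pose proof PI_RGT_0; lra) H).
  rewrite sin_asin, sin_0 in H1 by lra. lra.
Qed.

Lemma numeric : forall e, 0 < e <= 1/6 ->
  0 <= 2 * asin (e / 2) /\ 2 * (2 * asin (e / 2)) + acos (3 * e) <= PI /\
  e <= cos (2 * (2 * asin (e / 2)) + acos (3 * e)).
Proof.
  intros e He. set (t := asin (e / 2)). set (A0 := acos (3 * e)).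
  assert (Ht0 : 0 <= t) by (apply asin_nonneg; lra).
  assert (Hst : sin t = e / 2) by (apply sin_asin; lra).
  assert (Hct : cos t = sqrt (1 - (e/2)²)) by (apply cos_asin; lra).
  set (S2 := sqrt (1 - (e/2)²)) in *.
  assert (HS2 : 0 <= S2 /\ S2^2 = 1 - e^2/4).
  { split. apply sqrt_pos. unfold S2. rewrite <- Rsqr_pow2, Rsqr_sqrt. unfold Rsqr; field. unfold Rsqr; nra. }
  assert (HcA : cos A0 = 3 * e) by (apply cos_acos; lra).
  assert (HsA : sin A0 = sqrt (1 - (3 * e)²)) by (apply sin_acos; lra).
  set (S1 := sqrt (1 - (3 * e)²)) in *.
  assert (HS1 : 0 <= S1 /\ S1^2 = 1 - 9 * e^2).
  { split. apply sqrt_pos. unfold S1. rewrite <- Rsqr_pow2, Rsqr_sqrt. unfold Rsqr; field. unfold Rsqr; nra. }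
  assert (HA0 : 0 <= A0 <= PI / 2).
  { unfold A0. rewrite acos_asin by lra. pose proof (asin_nonneg (3 * e) ltac:(lra)). pose proof (asin_bound (3*e)). lra. }
  assert (E2t : 2 * (2 * t) = 2 * t + 2 * t) by ring.
  assert (Cth : cos (2 * t) = 1 - e^2 / 2) by (rewrite cos_2a_sin, Hst; field).
  assert (Sth : sin (2 * t) = e * S2) by (rewrite sin_2a, Hst, Hct; field).
  assert (C2 : cos (2 * (2 * t)) = 1 - 2 * e^2 * (1 - e^2/4)).
  { rewrite cos_2a_sin, Sth. destruct HS2 as [_ HS2]. nra. }
  assert (S2t : sin (2 * (2 * t)) = 2 * e * S2 * (1 - e^2/2)).
  { rewrite sin_2a, Sth, Cth. ring. }
  assert (Hpi : PI / 6 < t -> False).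
  { intro H. pose proof (asin_bound (e/2)). fold t in H0.
    pose proof (sin_increasing_1 (PI/6) t ltac:(pose proof PI_RGT_0; lra) ltac:(pose proof PI_RGT_0; lra) ltac:(lra) ltac:(lra) H).
    rewrite sin_PI6, Hst in H1. lra. }
  assert (H2t : 2 * (2 * t) <= PI / 2).
  { destruct (Rle_or_lt (2 * (2 * t)) (PI / 2)) as [H|H]; auto.
    assert (t <= PI / 6) by (apply Rnot_lt_le; intro; apply Hpi; auto).
    pose proof (cos_decreasing_1 (PI/2) (2 * (2 * t)) ltac:(pose proof PI_RGT_0; lra) ltac:(lra) ltac:(lra) ltac:(pose proof PI_RGT_0; lra) H).
    rewrite cos_PI2, C2 in H1. nra. }
  split; [lra|]. split; [lra|].
  rewrite cos_plus, C2, S2t, HcA, HsA.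
  destruct HS1 as [HS1a HS1b]. destruct HS2 as [HS2a HS2b].
  set (Q := S1 * S2).
  assert (HQ : 0 <= Q /\ Q^2 = (1 - 9 * e^2) * (1 - e^2/4)).
  { split. unfold Q; nra. unfold Q. rewrite Rpow_mult_distr, HS1b, HS2b. ring. }
  set (L := 1 - 3 * e^2 + 3/4 * e^4).
  set (k := 1 - e^2/2).
  assert (Hk : 0 < k) by (unfold k; nra).
  assert (HL : 0 < L) by (unfold L; nra).
  assert (Hpoly : (Q * k)^2 <= L^2).
  { rewrite Rpow_mult_distr. destruct HQ as [_ ->]. unfold L, k.
    assert (0 < e^2 <= 1/36) by nra. set (u := e^2) in *.
    replace (e^4) with (u^2) by (unfold u; ring). nra. }
  assert (Q * k <= L) by (apply Rsqr_incr_0_var; [rewrite !Rsqr_pow2; auto | lra]).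
  replace ((1 - 2 * e ^ 2 * (1 - e ^ 2 / 4)) * (3 * e) - 2 * e * S2 * k * S1)
    with (e + 2 * e * (L - Q * k)) by (unfold L, Q, k; field).
  nra.
Qed.

Lemma planar : forall a b c phi, 0 < a -> 0 < b -> 0 < c -> c <= a + b -> a <= b + c -> b <= a + c ->
  acos ((a^2 + c^2 - b^2)/(2*a*c)) <= PI - acos ((a^2+b^2-c^2)/(2*a*b)) /\
  c * cos (phi + acos ((a^2 + c^2 - b^2)/(2*a*c))) - a * cos phi =
  b * cos (PI - acos ((a^2+b^2-c^2)/(2*a*b)) + phi).
Proof.
  intros a b c phi Ha Hb Hc T1 T2 T3.
  set (rx := (a^2 + c^2 - b^2)/(2*a*c)). set (ro := (a^2+b^2-c^2)/(2*a*b)).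
  assert (Brx : -1 <= rx <= 1) by (unfold rx; apply ratio_unit; [nra | split; nra]).
  assert (Bro : -1 <= ro <= 1) by (unfold ro; apply ratio_unit; [nra | split; nra]).
  split.
  - rewrite <- acos_opp. apply acos_anti; try lra.
    assert (Esum : rx + ro = (b * (a^2 + c^2 - b^2) + c * (a^2+b^2-c^2)) / (2*a*b*c)) by (unfold rx, ro; field; lra).
    assert (0 <= (b * (a^2 + c^2 - b^2) + c * (a^2+b^2-c^2)) / (2*a*b*c)).
    { unfold Rdiv. apply Rle_mult_inv_pos; [|repeat apply Rmult_lt_0_compat; lra].
      replace (b * (a^2 + c^2 - b^2) + c * (a^2+b^2-c^2)) with ((b + c) * (a^2 - (b - c)^2)) by ring.
      apply Rmult_le_pos; nra. }
    lra.
  - rewrite cos_plus, cos_acos, sin_acos by lra.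
    replace (PI - acos ro + phi) with (PI - (acos ro - phi)) by ring.
    rewrite cos_minus, cos_PI, sin_PI, cos_minus, cos_acos, sin_acos by lra.
    assert (Eq : c * sqrt (1 - rx²) = b * sqrt (1 - ro²)).
    { apply Rsqr_inj.
      - apply Rmult_le_pos; [lra | apply sqrt_pos].
      - apply Rmult_le_pos; [lra | apply sqrt_pos].
      - rewrite !Rsqr_mult, !Rsqr_sqrt.
        2: { unfold Rsqr. nra. } 2: { unfold Rsqr. nra. }
        unfold rx, ro, Rsqr. field. lra. }
    assert (E2 : c * rx - a = - b * ro) by (unfold rx, ro; field; lra).
    replace (c * (cos phi * rx - sin phi * sqrt (1 - rx²)) - a * cos phi)
      with ((c * rx - a) * cos phi - sin phi * (c * sqrt (1 - rx²))) by ring.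
    rewrite E2, Eq. ring.
Qed.

Section Geo.
Variable X : Type.
Variable d : X -> X -> R.
Hypothesis Hm : is_metric d.
Hypothesis Hg : is_geodesic_space d.
Hypothesis Hc : CAT0_ineq d.

Lemma d_nonneg : forall x y, 0 <= d x y. Proof. apply Hm. Qed.
Lemma d_sym : forall x y, d x y = d y x. Proof. apply Hm. Qed.
Lemma d_tri : forall x y z, d x z <= d x y + d y z. Proof. apply Hm. Qed.
Lemma d_eq0 : forall x y, d x y = 0 -> x = y. Proof. apply Hm. Qed.
Lemma d_xx : forall x, d x x = 0. Proof. intro; apply Hm; auto. Qed.
Lemma d_pos : forall x y, x <> y -> 0 < d x y.
Proof. intros x y H. destruct (d_nonneg x y) as [H'|H']; auto. symmetry in H'. now apply d_eq0 in H'. Qed.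

Lemma geo_dist : forall g y z s, min_geodesic d g y z -> 0 <= s <= 1 -> d y (g s) = s * d y z.
Proof.
  intros g y z s [H0 [H1 H2]] Hs. rewrite <- H0 at 1. rewrite H2 by lra.
  rewrite Rabs_left1 by lra. ring.
Qed.

Lemma geo_dist2 : forall g y z s t, min_geodesic d g y z -> 0 <= s <= 1 -> 0 <= t <= 1 -> s <= t ->
  d (g s) (g t) = (t - s) * d y z.
Proof.
  intros g y z s t [H0 [H1 H2]] Hs Ht Hst. rewrite H2 by lra.
  rewrite Rabs_left1 by lra. ring.
Qed.

Lemma seg_param : forall g y z p, min_geodesic d g y z -> on_segment d y z p -> 0 < d y z ->
  p = g (d y p / d y z).
Proof.
  intros g y z p Hgeo Hp HD. unfold on_segment in Hp.
  set (D := d y z) in *. set (s := d y p / D).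
  pose proof (d_nonneg y p); pose proof (d_nonneg p z).
  assert (Hs : 0 <= s <= 1).
  { unfold s; split. unfold Rdiv; apply Rle_mult_inv_pos; lra.
    apply (Rmult_le_reg_r D); auto. unfold Rdiv. rewrite Rmult_assoc, Rinv_l by lra. lra. }
  assert (HsD : d y p = s * D). { unfold s. field. lra. }
  pose proof (Hc p y z g Hgeo s Hs) as HC.
  rewrite (d_sym p y), HsD in HC. assert (Hpz : d p z = (1 - s) * D) by lra. rewrite Hpz in HC.
  fold D in HC.
  assert (Hz : (d p (g s))^2 <= 0) by (ring_simplify in HC; nra).
  assert (d p (g s) = 0). { pose proof (d_nonneg p (g s)). nra. }
  now apply d_eq0.
Qed.

Lemma point_at : forall y z r, 0 <= r <= d y z -> exists p, on_segment d y z p /\ d y p = r.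
Proof.
  intros y z r Hr. destruct (Hg y z) as [g Hgeo].
  destruct (Req_dec (d y z) 0) as [H0|H0].
  - exists y. unfold on_segment. rewrite d_xx. split; lra.
  - pose proof (d_nonneg y z).
    assert (Hs : 0 <= r / d y z <= 1).
    { split. unfold Rdiv; apply Rle_mult_inv_pos; lra.
      apply (Rmult_le_reg_r (d y z)); [lra|]. unfold Rdiv. rewrite Rmult_assoc, Rinv_l by lra. lra. }
    exists (g (r / d y z)). unfold on_segment.
    rewrite geo_dist with (z := z) by auto.
    assert (E : d (g (r / d y z)) z = (1 - r / d y z) * d y z).
    { destruct Hgeo as [G0 [G1 G2]]. transitivity (d (g (r / d y z)) (g 1)); [now rewrite G1|]. rewrite G2 by lra.
      rewrite Rabs_left1 by lra. ring. }
    rewrite E. split; field; lra.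
Qed.

Lemma seg_trans : forall x y p q, on_segment d x y p -> on_segment d x y q -> d x p <= d x q ->
  on_segment d x q p.
Proof.
  intros x y p q Hp Hq Hpq. destruct (Hg x y) as [g Hgeo].
  unfold on_segment in *.
  pose proof (d_nonneg x p); pose proof (d_nonneg p y); pose proof (d_nonneg x q); pose proof (d_nonneg q y).
  destruct (Req_dec (d x y) 0) as [Hz0|Hz0].
  - assert (Q0 : d x q = 0) by lra. assert (P0 : d x p = 0) by lra.
    apply d_eq0 in Q0; apply d_eq0 in P0. subst. rewrite d_xx. lra.
  - assert (HD : 0 < d x y) by (pose proof (d_nonneg x y); lra).
    pose proof (seg_param g x y p Hgeo Hp HD) as Ep.
    pose proof (seg_param g x y q Hgeo Hq HD) as Eq.
    assert (Hsp : 0 <= d x p / d x y <= 1).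
    { split. unfold Rdiv; apply Rle_mult_inv_pos; lra.
      apply (Rmult_le_reg_r (d x y)); [lra|]. unfold Rdiv. rewrite Rmult_assoc, Rinv_l by lra. lra. }
    assert (Hsq : 0 <= d x q / d x y <= 1).
    { split. unfold Rdiv; apply Rle_mult_inv_pos; lra.
      apply (Rmult_le_reg_r (d x y)); [lra|]. unfold Rdiv. rewrite Rmult_assoc, Rinv_l by lra. lra. }
    assert (Hle : d x p / d x y <= d x q / d x y).
    { unfold Rdiv. apply Rmult_le_compat_r; auto. left; apply Rinv_0_lt_compat; auto. }
    set (sp := d x p / d x y) in *. set (sq := d x q / d x y) in *.
    assert (E : d p q = (sq - sp) * d x y).
    { rewrite Ep, Eq. apply geo_dist2; auto. }
    rewrite E. unfold sp, sq. field. lra.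
Qed.




Definition cratio (p x q : X) := ((d x p)^2 + (d x q)^2 - (d p q)^2) / (2 * d x p * d x q).

Lemma comp_eq : forall p x q, comp_angle d p x q = acos (cratio p x q).
Proof. reflexivity. Qed.

Lemma cratio_bound : forall p x q, 0 < d x p -> 0 < d x q -> -1 <= cratio p x q <= 1.
Proof.
  intros p x q Hp Hq. unfold cratio. apply ratio_unit. nra.
  pose proof (d_tri x p q); pose proof (d_tri p x q); pose proof (d_tri x q p).
  rewrite (d_sym p x) in H0. rewrite (d_sym q p) in H1. pose proof (d_nonneg p q).
  split; nra.
Qed.

Lemma cratio_sym : forall p x q, cratio p x q = cratio q x p.
Proof.
  intros. unfold cratio. rewrite (d_sym q p).
  replace (2 * d x q * d x p) with (2 * d x p * d x q) by ring.
  f_equal; ring.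
Qed.

Lemma comp_sym : forall p x q, comp_angle d p x q = comp_angle d q x p.
Proof. intros. rewrite !comp_eq, cratio_sym. auto. Qed.

Lemma cos_comp : forall p x q, 0 < d x p -> 0 < d x q -> cos (comp_angle d p x q) = cratio p x q.
Proof. intros. rewrite comp_eq, cos_acos; auto. apply cratio_bound; auto. Qed.

Lemma dist_comp : forall p x q, 0 < d x p -> 0 < d x q ->
  (d p q)^2 = (d x p)^2 + (d x q)^2 - 2 * d x p * d x q * cos (comp_angle d p x q).
Proof. intros. rewrite cos_comp by auto. unfold cratio. field. lra. Qed.

Lemma comp_bound : forall p x q, 0 <= comp_angle d p x q <= PI.
Proof. intros. apply acos_bound. Qed.

Lemma mono1 : forall x y z p, 0 < d x y -> 0 < d x z -> on_segment d x y p -> 0 < d x p ->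
  comp_angle d p x z <= comp_angle d y x z.
Proof.
  intros x y z p Hy Hz Hp Hp0. destruct (Hg x y) as [g Hgeo].
  pose proof (seg_param g x y p Hgeo Hp Hy) as Ep.
  set (s := d x p / d x y) in *.
  assert (Hs : 0 < s <= 1).
  { unfold on_segment in Hp. pose proof (d_nonneg p y). unfold s; split.
    apply Rdiv_lt_0_compat; lra.
    apply (Rmult_le_reg_r (d x y)); [lra|]. unfold Rdiv. rewrite Rmult_assoc, Rinv_l by lra. lra. }
  assert (HsD : d x p = s * d x y) by (unfold s; field; lra).
  pose proof (Hc z x y g Hgeo s ltac:(lra)) as HC. rewrite <- Ep in HC.
  rewrite !comp_eq. apply acos_anti; try (apply cratio_bound; auto).
  unfold cratio. rewrite HsD. rewrite (d_sym z p), (d_sym z x), (d_sym z y) in HC.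
  set (D := d x y) in *. set (e := d x z) in *.
  assert (E : ((D^2 + e^2 - (d y z)^2) / (2 * D * e)) = (s * (D^2 + e^2 - (d y z)^2)) / (2 * (s * D) * e)).
  { field. lra. }
  rewrite E. unfold Rdiv. apply Rmult_le_compat_r.
  - left. apply Rinv_0_lt_compat. nra.
  - rewrite (d_sym p z) in *. nra.
Qed.

Lemma mono2 : forall x y z p q, 0 < d x y -> 0 < d x z -> on_segment d x y p -> on_segment d x z q ->
  0 < d x p -> 0 < d x q -> comp_angle d p x q <= comp_angle d y x z.
Proof.
  intros. apply Rle_trans with (comp_angle d p x z).
  - rewrite (comp_sym p x q), (comp_sym p x z). apply mono1; auto.
  - apply mono1; auto.
Qed.


Lemma seg_refl : forall x y, on_segment d x y y.
Proof. intros. unfold on_segment. rewrite d_xx. lra. Qed.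

Lemma angle_ex : forall x y z, 0 < d x y -> 0 < d x z -> exists A, angle_limit d x y z A /\ 0 <= A /\
  forall p q, on_segment d x y p -> on_segment d x z q -> 0 < d x p -> 0 < d x q -> A <= comp_angle d p x q.
Proof.
  intros x y z Hy Hz.
  set (E := fun r => exists p q, on_segment d x y p /\ on_segment d x z q /\ 0 < d x p /\ 0 < d x q /\
                               r = - comp_angle d p x q).
  assert (Hb : bound E).
  { exists 0. intros r [p [q [_ [_ [_ [_ ->]]]]]]. pose proof (comp_bound p x q). lra. }
  assert (Hne : exists r, E r).
  { exists (- comp_angle d y x z). exists y, z. repeat split; auto using seg_refl. }
  destruct (completeness E Hb Hne) as [m0 [Hub Hlub]].
  assert (Hlow : forall p q, on_segment d x y p -> on_segment d x z q -> 0 < d x p -> 0 < d x q ->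
     - m0 <= comp_angle d p x q).
  { intros p q Hp Hq Hp0 Hq0. assert (E (- comp_angle d p x q)) by (exists p, q; repeat split; auto).
    apply Hub in H. lra. }
  exists (- m0). split; [|split; auto].
  2: { assert (m0 <= 0). { apply Hlub. intros r [p [q [_ [_ [_ [_ ->]]]]]]. pose proof (comp_bound p x q). lra. }
       lra. }
  intros e He.
  assert (Hex : exists p0 q0, on_segment d x y p0 /\ on_segment d x z q0 /\ 0 < d x p0 /\ 0 < d x q0 /\
                comp_angle d p0 x q0 < - m0 + e).
  { apply NNPP. intro Hn.
    assert (is_upper_bound E (m0 - e)).
    { intros r [p [q [Hp [Hq [Hp0 [Hq0 ->]]]]]]. apply Rnot_lt_le. intro Hlt. apply Hn.
      exists p, q. repeat split; auto. lra. }
    apply Hlub in H. lra. }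
  destruct Hex as [p0 [q0 [Hp0 [Hq0 [Hp00 [Hq00 Hlt]]]]]].
  exists (Rmin (d x p0) (d x q0)). split. { apply Rmin_glb_lt; auto. }
  intros p q Hp Hq [Hp1 Hp2] [Hq1 Hq2].
  pose proof (Rmin_l (d x p0) (d x q0)); pose proof (Rmin_r (d x p0) (d x q0)).
  assert (S1 : on_segment d x p0 p) by (apply seg_trans with y; auto; lra).
  assert (S2 : on_segment d x q0 q) by (apply seg_trans with z; auto; lra).
  pose proof (mono2 x p0 q0 p q Hp00 Hq00 S1 S2 Hp1 Hq1).
  pose proof (Hlow p q Hp Hq Hp1 Hq1).
  apply Rabs_def1; lra.
Qed.

Lemma angle_unique : forall x y z A1 A2, 0 < d x y -> 0 < d x z ->
  angle_limit d x y z A1 -> angle_limit d x y z A2 -> A1 = A2.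
Proof.
  intros x y z A1 A2 Hy Hz H1 H2. apply NNPP. intro Hne.
  set (e := Rabs (A1 - A2) / 2).
  assert (He : 0 < e). { unfold e. assert (0 < Rabs (A1 - A2)) by (apply Rabs_pos_lt; lra). lra. }
  destruct (H1 e He) as [d1 [Hd1 P1]]. destruct (H2 e He) as [d2 [Hd2 P2]].
  set (r1 := Rmin (Rmin d1 d2) (d x y) / 2). set (r2 := Rmin (Rmin d1 d2) (d x z) / 2).
  assert (R1 : 0 < r1 /\ r1 < d1 /\ r1 < d2 /\ r1 <= d x y).
  { unfold r1. pose proof (Rmin_l (Rmin d1 d2) (d x y)); pose proof (Rmin_r (Rmin d1 d2) (d x y)).
    pose proof (Rmin_l d1 d2); pose proof (Rmin_r d1 d2).
    assert (0 < Rmin (Rmin d1 d2) (d x y)) by (repeat apply Rmin_glb_lt; auto). lra. }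
  assert (R2 : 0 < r2 /\ r2 < d1 /\ r2 < d2 /\ r2 <= d x z).
  { unfold r2. pose proof (Rmin_l (Rmin d1 d2) (d x z)); pose proof (Rmin_r (Rmin d1 d2) (d x z)).
    pose proof (Rmin_l d1 d2); pose proof (Rmin_r d1 d2).
    assert (0 < Rmin (Rmin d1 d2) (d x z)) by (repeat apply Rmin_glb_lt; auto). lra. }
  destruct (point_at x y r1 ltac:(lra)) as [p [Hp Hpd]].
  destruct (point_at x z r2 ltac:(lra)) as [q [Hq Hqd]].
  pose proof (P1 p q Hp Hq ltac:(lra) ltac:(lra)) as Q1.
  pose proof (P2 p q Hp Hq ltac:(lra) ltac:(lra)) as Q2.
  apply Rabs_def2 in Q1; apply Rabs_def2 in Q2. unfold e in *.
  revert Q1 Q2. unfold Rabs. destruct (Rcase_abs (A1 - A2)); lra.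
Qed.

Lemma ga_limit : forall x y z, 0 < d x y -> 0 < d x z -> angle_limit d x y z (gangle d x y z).
Proof.
  intros x y z Hy Hz. unfold gangle. apply epsilon_spec.
  destruct (angle_ex x y z Hy Hz) as [A [HA _]]. eauto.
Qed.

Lemma ga_props : forall x y z, 0 < d x y -> 0 < d x z -> 0 <= gangle d x y z /\
  forall p q, on_segment d x y p -> on_segment d x z q -> 0 < d x p -> 0 < d x q ->
  gangle d x y z <= comp_angle d p x q.
Proof.
  intros x y z Hy Hz. destruct (angle_ex x y z Hy Hz) as [A [HA [H0 H1]]].
  rewrite (angle_unique x y z (gangle d x y z) A Hy Hz (ga_limit x y z Hy Hz) HA). auto.
Qed.

Lemma ga_nonneg : forall x y z, 0 < d x y -> 0 < d x z -> 0 <= gangle d x y z.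
Proof. intros. apply ga_props; auto. Qed.

Lemma ga_le_comp : forall x y z p q, 0 < d x y -> 0 < d x z -> on_segment d x y p -> on_segment d x z q ->
  0 < d x p -> 0 < d x q -> gangle d x y z <= comp_angle d p x q.
Proof. intros. apply ga_props; auto. Qed.

Lemma ga_le_comp0 : forall x y z, 0 < d x y -> 0 < d x z -> gangle d x y z <= comp_angle d y x z.
Proof. intros. apply ga_le_comp; auto using seg_refl. Qed.

Lemma ga_le_pi : forall x y z, 0 < d x y -> 0 < d x z -> gangle d x y z <= PI.
Proof. intros. eapply Rle_trans. apply ga_le_comp0; auto. apply comp_bound. Qed.

Lemma ga_sym : forall x y z, 0 < d x y -> 0 < d x z -> gangle d x y z = gangle d x z y.
Proof.
  intros x y z Hy Hz. apply (angle_unique x z y); auto.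
  - intros e He. destruct (ga_limit x y z Hy Hz e He) as [dl [Hdl P]].
    exists dl. split; auto. intros p q Hp Hq Hp1 Hq1. rewrite comp_sym. auto.
  - apply ga_limit; auto.
Qed.

Lemma ga_refl : forall x y, 0 < d x y -> gangle d x y y = 0.
Proof.
  intros x y Hy. pose proof (ga_nonneg x y y Hy Hy). pose proof (ga_le_comp0 x y y Hy Hy).
  rewrite comp_eq in H0. unfold cratio in H0. rewrite d_xx in H0.
  replace ((d x y ^ 2 + d x y ^ 2 - 0 ^ 2) / (2 * d x y * d x y)) with 1 in H0 by (field; lra).
  rewrite acos_1 in H0. lra.
Qed.


Lemma sqr_le_sqrt : forall u v, 0 <= u -> 0 <= v -> u^2 <= v^2 -> u <= v.
Proof. intros. nra. Qed.

Lemma ga_tri : forall x y z w, 0 < d x y -> 0 < d x z -> 0 < d x w ->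
  gangle d x y w <= gangle d x y z + gangle d x z w.
Proof.
  intros x y z w Hy Hz Hw.
  set (a := gangle d x y z). set (b := gangle d x z w). set (c := gangle d x y w).
  destruct (Rle_or_lt c (a + b)) as [Hle|Hlt]; auto. exfalso.
  assert (Ha0 : 0 <= a) by (apply ga_nonneg; auto).
  assert (Hb0 : 0 <= b) by (apply ga_nonneg; auto).
  assert (Hcpi : c <= PI) by (apply ga_le_pi; auto).
  set (de := (c - a - b) / 4).
  assert (Hde : 0 < de) by (unfold de; lra).
  set (a' := a + de). set (b' := b + de).
  set (h := (a' + b') / 2). set (A' := (b' - a') / 2).
  assert (Hh : 0 < h < PI / 2) by (unfold h, a', b', de; lra).
  assert (HA : - h <= A' <= h) by (unfold A', h, a', b', de; lra).
  set (cA := cos A'). set (sA := sin A'). set (ch := cos h). set (sh := sin h).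
  assert (HcA : 0 < cA) by (apply cos_gt_0; lra).
  assert (Hch : 0 < ch) by (apply cos_gt_0; lra).
  assert (Hsh : 0 < sh) by (apply sin_gt_0; lra).
  assert (E1 : sh^2 + ch^2 = 1) by (pose proof (sin2_cos2 h); unfold Rsqr in *; unfold sh, ch; lra).
  assert (E2 : sA^2 + cA^2 = 1) by (pose proof (sin2_cos2 A'); unfold Rsqr in *; unfold sA, cA; lra).
  assert (Ea' : a' = h - A') by (unfold h, A'; lra).
  assert (Eb' : b' = h + A') by (unfold h, A'; lra).
  assert (Hca : cos a' = ch * cA + sh * sA) by (rewrite Ea', cos_minus; auto).
  assert (Hsa : sin a' = sh * cA - ch * sA) by (rewrite Ea', sin_minus; auto).
  assert (Hcb : cos b' = ch * cA - sh * sA) by (rewrite Eb', cos_plus; auto).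
  assert (Hsb : sin b' = sh * cA + ch * sA) by (rewrite Eb', sin_plus; auto).
  assert (Hsa0 : 0 <= sin a') by (apply sin_ge_0; unfold a', b', h, de in *; lra).
  assert (Hsb0 : 0 <= sin b') by (apply sin_ge_0; unfold a', b', h, de in *; lra).
  set (s2 := ch / cA).
  assert (Hs2 : 0 < s2) by (unfold s2; apply Rdiv_lt_0_compat; auto).
  assert (Ks2 : s2 * cA = ch) by (unfold s2; field; lra).
  destruct (ga_limit x y z Hy Hz de Hde) as [d1 [Hd1 L1]].
  destruct (ga_limit x z w Hz Hw de Hde) as [d2 [Hd2 L2]].
  change (gangle d x y z) with a in L1. change (gangle d x z w) with b in L2.
  set (M := Rmin (Rmin (d x y) (d x w)) (Rmin (Rmin d1 d2) (d x z))).
  assert (HM : 0 < M /\ M <= d x y /\ M <= d x w /\ M <= d1 /\ M <= d2 /\ M <= d x z).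
  { unfold M. pose proof (Rmin_l (Rmin (d x y) (d x w)) (Rmin (Rmin d1 d2) (d x z))).
    pose proof (Rmin_r (Rmin (d x y) (d x w)) (Rmin (Rmin d1 d2) (d x z))).
    pose proof (Rmin_l (d x y) (d x w)); pose proof (Rmin_r (d x y) (d x w)).
    pose proof (Rmin_l (Rmin d1 d2) (d x z)); pose proof (Rmin_r (Rmin d1 d2) (d x z)).
    pose proof (Rmin_l d1 d2); pose proof (Rmin_r d1 d2).
    assert (0 < M) by (unfold M; repeat apply Rmin_glb_lt; auto). unfold M in *. lra. }
  set (t := M / (2 * (1 + s2))).
  assert (Ht : 0 < t /\ t < M /\ s2 * t < M).
  { unfold t. split; [apply Rdiv_lt_0_compat; lra|]. split.
    - apply (Rmult_lt_reg_r (2 * (1 + s2))); [lra|]. unfold Rdiv. rewrite Rmult_assoc, Rinv_l by lra. nra.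
    - replace (s2 * (M / (2 * (1 + s2)))) with (M * (s2 / (2 * (1 + s2)))) by (field; lra).
      assert (s2 / (2 * (1 + s2)) < 1).
      { apply (Rmult_lt_reg_r (2 * (1 + s2))); [lra|]. unfold Rdiv. rewrite Rmult_assoc, Rinv_l by lra. nra. }
      nra. }
  destruct (point_at x y t ltac:(lra)) as [p1 [S1 D1]].
  destruct (point_at x z (s2 * t) ltac:(nra)) as [p2 [S2 D2]].
  destruct (point_at x w t ltac:(lra)) as [p3 [S3 D3]].
  assert (C12 := L1 p1 p2 S1 S2 ltac:(lra) ltac:(nra)). apply Rabs_def2 in C12.
  assert (C23 := L2 p2 p3 S2 S3 ltac:(nra) ltac:(lra)). apply Rabs_def2 in C23.
  assert (C13 : c <= comp_angle d p1 x p3) by (apply ga_le_comp; auto; lra).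
  pose proof (comp_bound p1 x p2); pose proof (comp_bound p2 x p3); pose proof (comp_bound p1 x p3).
  assert (Q12 : cos a' <= cos (comp_angle d p1 x p2)) by (apply cos_anti; unfold a', b', h, de in *; lra).
  assert (Q23 : cos b' <= cos (comp_angle d p2 x p3)) by (apply cos_anti; unfold a', b', h, de in *; lra).
  assert (Q13 : cos (comp_angle d p1 x p3) <= cos c) by (apply cos_anti; lra).
  pose proof (dist_comp p1 x p2 ltac:(lra) ltac:(nra)) as F12.
  pose proof (dist_comp p2 x p3 ltac:(nra) ltac:(lra)) as F23.
  pose proof (dist_comp p1 x p3 ltac:(lra) ltac:(lra)) as F13.
  rewrite D1, D2 in F12. rewrite D2, D3 in F23. rewrite D1, D3 in F13.
  assert (Id1 : cA^2 * (1 + s2^2 - 2 * s2 * cos a') = (sin a')^2).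
  { rewrite Hca, Hsa.
    replace (cA ^ 2 * (1 + s2 ^ 2 - 2 * s2 * (ch * cA + sh * sA))) with
      (cA^2 + (s2*cA)^2 - 2 * (s2 * cA) * (ch * cA + sh * sA) * cA) by ring.
    rewrite Ks2.
    replace (cA ^ 2 + ch ^ 2 - 2 * ch * (ch * cA + sh * sA) * cA - (sh * cA - ch * sA) ^ 2)
      with (cA^2 * (1 - sh^2 - ch^2) + ch^2 * (1 - sA^2 - cA^2)) by ring. nra. }
  assert (Id2 : cA^2 * (1 + s2^2 - 2 * s2 * cos b') = (sin b')^2).
  { rewrite Hcb, Hsb.
    replace (cA ^ 2 * (1 + s2 ^ 2 - 2 * s2 * (ch * cA - sh * sA))) with
      (cA^2 + (s2*cA)^2 - 2 * (s2 * cA) * (ch * cA - sh * sA) * cA) by ring.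
    rewrite Ks2.
    replace (cA ^ 2 + ch ^ 2 - 2 * ch * (ch * cA - sh * sA) * cA - (sh * cA + ch * sA) ^ 2)
      with (cA^2 * (1 - sh^2 - ch^2) + ch^2 * (1 - sA^2 - cA^2)) by ring. nra. }
  assert (B12 : d p1 p2 <= t * sin a' / cA).
  { apply sqr_le_sqrt. apply d_nonneg. unfold Rdiv. apply Rle_mult_inv_pos; nra.
    rewrite F12. replace ((t * sin a' / cA)^2) with (t^2 * ((sin a')^2 / cA^2)) by (field; lra).
    rewrite <- Id1. replace (cA ^ 2 * (1 + s2 ^ 2 - 2 * s2 * cos a') / cA ^ 2) with (1 + s2 ^ 2 - 2 * s2 * cos a')
      by (field; lra).
    assert (0 <= t * (s2 * t) * (cos (comp_angle d p1 x p2) - cos a')) by (apply Rmult_le_pos; nra). nra. }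
  assert (B23 : d p2 p3 <= t * sin b' / cA).
  { apply sqr_le_sqrt. apply d_nonneg. unfold Rdiv. apply Rle_mult_inv_pos; nra.
    rewrite F23. replace ((t * sin b' / cA)^2) with (t^2 * ((sin b')^2 / cA^2)) by (field; lra).
    rewrite <- Id2. replace (cA ^ 2 * (1 + s2 ^ 2 - 2 * s2 * cos b') / cA ^ 2) with (1 + s2 ^ 2 - 2 * s2 * cos b')
      by (field; lra).
    assert (0 <= (s2 * t) * t * (cos (comp_angle d p2 x p3) - cos b')) by (apply Rmult_le_pos; nra). nra. }
  assert (Sum : t * sin a' / cA + t * sin b' / cA = 2 * t * sh).
  { rewrite Hsa, Hsb. field. lra. }
  pose proof (d_tri p1 p2 p3) as T13.
  assert (B13 : d p1 p3 <= 2 * t * sh) by lra.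
  set (sc := sin (c / 2)).
  assert (Ecc : cos c = 1 - 2 * sc * sc).
  { unfold sc. rewrite <- cos_2a_sin. f_equal. field. }
  assert (Hsc : sh < sc).
  { unfold sh, sc. apply sin_increasing_1; unfold h, a', b', de in *; lra. }
  assert (Hsh0 : 0 <= d p1 p3) by apply d_nonneg.
  assert (4 * t^2 * sc^2 <= (d p1 p3)^2) by (rewrite F13; nra).
  assert (Y1 : (d p1 p3)^2 <= (2 * t * sh)^2).
  { assert (0 <= 2 * t * sh) by nra. apply pow_incr. lra. }
  assert (Y2 : (2 * t * sh)^2 < (2 * t * sc)^2).
  { assert (0 < 2 * t * sh) by nra. assert (2 * t * sh < 2 * t * sc) by nra. nra. }
  nra.
Qed.


Lemma dpos : forall x y, y <> x -> 0 < d x y.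
Proof. intros. apply d_pos. auto. Qed.

Lemma dir_pos : forall x U n, is_dir d x U -> 0 < d x (U n).
Proof. intros x U n [H _]. apply dpos. auto. Qed.

Lemma dir_const : forall x y, 0 < d x y -> is_dir d x (fun _ => y).
Proof.
  intros x y Hy. split.
  - intros _ E. subst. rewrite d_xx in Hy. lra.
  - intros e He. exists 0%nat. intros. rewrite ga_refl; auto.
Qed.

Lemma ga_diff : forall x a b c e, 0 < d x a -> 0 < d x b -> 0 < d x c -> 0 < d x e ->
  Rabs (gangle d x a b - gangle d x c e) <= gangle d x a c + gangle d x b e.
Proof.
  intros x a b c e Ha Hb Hc' He.
  pose proof (ga_tri x a c b Ha Hc' Hb). pose proof (ga_tri x c e b Hc' He Hb).
  pose proof (ga_tri x c a e Hc' Ha He). pose proof (ga_tri x a b e Ha Hb He).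
  rewrite (ga_sym x e b) in H0 by auto. rewrite (ga_sym x c a) in H1 by auto.
  apply Rabs_le. lra.
Qed.

Lemma da_cv : forall x U V, is_dir d x U -> is_dir d x V ->
  Un_cv (fun n => gangle d x (U n) (V n)) (dangle d x U V).
Proof.
  intros x U V HU HV. unfold dangle. apply epsilon_spec.
  assert (Cc : Cauchy_crit (fun n => gangle d x (U n) (V n))).
  { intros eps Heps. destruct HU as [HU0 HU1]. destruct HV as [HV0 HV1].
    destruct (HU1 (eps/2) ltac:(lra)) as [N1 P1]. destruct (HV1 (eps/2) ltac:(lra)) as [N2 P2].
    exists (max N1 N2). intros n m Hn Hm2. unfold R_dist.
    eapply Rle_lt_trans. apply ga_diff; apply dpos; auto.
    assert (gangle d x (U n) (U m) < eps / 2) by (apply P1; lia).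
    assert (gangle d x (V n) (V m) < eps / 2) by (apply P2; lia). lra. }
  destruct (R_complete _ Cc) as [l Hl]. eauto.
Qed.

Lemma da_sym : forall x U V, is_dir d x U -> is_dir d x V -> dangle d x U V = dangle d x V U.
Proof.
  intros x U V HU HV. apply (UL_sequence (fun n => gangle d x (U n) (V n))).
  - apply da_cv; auto.
  - pose proof (da_cv x V U HV HU) as H. intros eps Heps. destruct (H eps Heps) as [N HN].
    exists N. intros n Hn. rewrite ga_sym; auto using dir_pos.
Qed.

Lemma cv_const : forall c, Un_cv (fun _ => c) c.
Proof. intros c eps Heps. exists 0%nat. intros. unfold R_dist. rewrite Rminus_diag, Rabs_R0. auto. Qed.

Lemma da_range : forall x U V, is_dir d x U -> is_dir d x V -> 0 <= dangle d x U V <= PI.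
Proof.
  intros x U V HU HV. pose proof (da_cv x U V HU HV). split.
  - apply (Rle_cv_lim (Un := fun _ => 0) (Vn := fun n => gangle d x (U n) (V n))); auto using cv_const.
    intros; apply ga_nonneg; auto using dir_pos.
  - apply (Rle_cv_lim (Un := fun n => gangle d x (U n) (V n)) (Vn := fun _ => PI)); auto using cv_const.
    intros; apply ga_le_pi; auto using dir_pos.
Qed.

Lemma da_tri_pt : forall x U a b, is_dir d x U -> 0 < d x a -> 0 < d x b ->
  dangle d x U (fun _ => b) <= dangle d x U (fun _ => a) + gangle d x a b.
Proof.
  intros x U a b HU Ha Hb.
  apply (Rle_cv_lim (Un := fun n => gangle d x (U n) b) (Vn := fun n => gangle d x (U n) a + gangle d x a b)).
  - intros n. apply ga_tri; auto using dir_pos.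
  - apply (da_cv x U (fun _ => b)); auto using dir_const.
  - apply CV_plus. apply (da_cv x U (fun _ => a)); auto using dir_const. apply cv_const.
Qed.

Lemma key : forall (l : option R) (xi : R -> X) (tau : R) (bg : nat -> X) (T : R) (x : X) (gamma : nat -> X) (e : R),
  0 < e <= 1/6 ->
  self_contracted d l xi -> in_dom l tau -> is_dir d (xi tau) bg ->
  (forall t, tau < t -> in_dom l t -> xi t <> xi tau ->
     dangle d (xi tau) bg (fun _ => xi t) <= acos (3 * e)) ->
  0 < d (xi tau) x ->
  dangle d (xi tau) (fun _ => x) bg >= PI - 2 * asin (e / 2) ->
  is_dir d x gamma ->
  dangle d x (fun _ => xi tau) gamma <= 2 * asin (e / 2) ->
  tau < T -> in_dom l T -> forall s, T <= s -> in_dom l s ->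
  Pproj d x gamma (xi tau) + e / 2 * d (xi tau) (xi T) <= Pproj d x gamma (xi s).
Proof using Hm Hg Hc.
  intros l xi tau bg T x gamma e He Hsc Htau Hbg Hbgh Hox Hxang Hgam Hgamh HT HTd s Hs Hsd.
  set (o := xi tau) in *. set (y := xi s).
  destruct (numeric e He) as [Hth0 [Hsum Hcos]].
  set (th := 2 * asin (e / 2)) in *. set (A0 := acos (3 * e)) in *.
  assert (HA0 : 0 <= A0 <= PI / 2).
  { unfold A0. rewrite acos_asin by lra. pose proof (asin_nonneg (3 * e) ltac:(lra)). pose proof (asin_bound (3*e)). lra. }
  assert (Hxo : x <> o). { intro E. rewrite E, d_xx in Hox by auto. lra. }
  assert (Hdxo : 0 < d x o) by (rewrite d_sym by auto; auto).
  assert (HB : d o (xi T) <= 2 * d o y).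
  { pose proof (Hsc tau T s Htau Hsd ltac:(lra)) as H1. fold o y in H1.
    pose proof (d_tri o y (xi T)). rewrite (d_sym y (xi T)) in H. lra. }
  pose proof (d_nonneg o (xi T)) as HoT.
  assert (HPo : Pproj d x gamma o = d x o * cos (dangle d x gamma (fun _ => o))).
  { unfold Pproj. destruct (excluded_middle_informative (o = x)); auto. congruence. }
  destruct (classic (y = o)) as [Eyo|Nyo].
  { rewrite Eyo in HB. rewrite d_xx in HB by auto. rewrite Eyo.
    assert (d o (xi T) = 0) by lra. rewrite H. lra. }
  assert (Hdoy : 0 < d o y) by (apply dpos; auto).
  assert (Hbgy : dangle d o bg (fun _ => y) <= A0) by (apply Hbgh; auto; lra).
  assert (Hbeta : PI - th - A0 <= gangle d o x y).
  { pose proof (da_tri_pt o bg y x Hbg Hdoy Hox) as H1.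
    rewrite (da_sym o (fun _ => x) bg) in Hxang by (auto using dir_const).
    rewrite (ga_sym o y x) in H1 by auto. lra. }
  assert (Hyx : y <> x).
  { intro E. rewrite E in Hbeta. rewrite ga_refl in Hbeta by auto. pose proof PI_RGT_0. lra. }
  assert (Hdxy : 0 < d x y) by (apply dpos; auto).
  assert (Hbt : gangle d o x y <= comp_angle d x o y) by (apply ga_le_comp0; auto).
  assert (Hal : gangle d x o y <= comp_angle d o x y) by (apply ga_le_comp0; auto).
  assert (Hal0 : 0 <= gangle d x o y) by (apply ga_nonneg; auto).
  set (phi0 := dangle d x gamma (fun _ => o)).
  assert (Hphi : 0 <= phi0 <= th).
  { unfold phi0. rewrite (da_sym x gamma (fun _ => o)) by (auto using dir_const).
    split; auto. apply da_range; auto using dir_const. }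
  set (psi := dangle d x gamma (fun _ => y)).
  assert (Hpsi : 0 <= psi <= phi0 + gangle d x o y).
  { split. apply da_range; auto using dir_const. apply da_tri_pt; auto. }
  assert (HPy : Pproj d x gamma y = d x y * cos psi).
  { unfold Pproj. destruct (excluded_middle_informative (y = x)); auto. congruence. }
  pose proof (d_tri x o y) as T1. pose proof (d_tri o x y) as T2. pose proof (d_tri x y o) as T3.
  rewrite (d_sym o x) in T2. rewrite (d_sym y o) in T3.
  destruct (planar (d x o) (d o y) (d x y) phi0 Hdxo Hdoy Hdxy ltac:(lra) ltac:(lra) ltac:(lra)) as [Pl1 Pl2].
  assert (Ealt : comp_angle d o x y = acos ((d x o ^ 2 + d x y ^ 2 - d o y ^ 2) / (2 * d x o * d x y))) by reflexivity.
  assert (Ebt : comp_angle d x o y = acos ((d x o ^ 2 + d o y ^ 2 - d x y ^ 2) / (2 * d x o * d o y))).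
  { unfold comp_angle. rewrite (d_sym o x). reflexivity. }
  rewrite <- Ealt, <- Ebt in Pl1, Pl2.
  pose proof (comp_bound o x y). pose proof (comp_bound x o y).
  assert (Hcpsi : cos (phi0 + comp_angle d o x y) <= cos psi) by (apply cos_anti; lra).
  assert (Hc2 : cos (2 * th + A0) <= cos (PI - comp_angle d x o y + phi0)) by (apply cos_anti; lra).
  rewrite HPo, HPy.
  assert (d x y * cos (phi0 + comp_angle d o x y) <= d x y * cos psi) by (apply Rmult_le_compat_l; lra).
  assert (e * d o y <= d o y * cos (PI - comp_angle d x o y + phi0)) by nra.
  assert (e / 2 * d o (xi T) <= e * d o y) by nra.
  change (dangle d x gamma (fun _ => o)) with phi0. lra.
Qed.

End Geo.

Lemma rabs_le_inv : forall a b, Rabs a <= b -> -b <= a <= b.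
Proof. intros a b. unfold Rabs. destruct (Rcase_abs a); lra. Qed.

Lemma rsup_spec : forall S : R -> Prop, bound S -> (exists r, S r) -> is_lub S (Rsup S).
Proof.
  intros S Hb Hne. unfold Rsup. apply epsilon_spec.
  destruct (completeness S Hb Hne) as [m Hm]. eauto.
Qed.

Lemma hull_step : forall (S1 S2 : R -> Prop) K p0 k,
  (forall r, S1 r -> S2 r) -> (exists r, S1 r) -> S2 p0 ->
  (forall r, S2 r -> Rabs r <= K) -> (forall r, S1 r -> p0 + k <= r) ->
  hull_length S1 <= hull_length S2 - k.
Proof.
  intros S1 S2 K p0 k Hsub Hne1 Hp0 HK Hlow.
  assert (B2 : bound S2) by (exists K; intros r Hr; apply HK in Hr; apply rabs_le_inv in Hr; lra).
  assert (B1 : bound S1) by (exists K; intros r Hr; apply Hsub, HK in Hr; apply rabs_le_inv in Hr; lra).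
  assert (BN1 : bound (fun r => S1 (- r))).
  { exists K; intros r Hr; apply Hsub, HK in Hr. rewrite Rabs_Ropp in Hr. apply rabs_le_inv in Hr; lra. }
  assert (BN2 : bound (fun r => S2 (- r))).
  { exists K; intros r Hr; apply HK in Hr. rewrite Rabs_Ropp in Hr. apply rabs_le_inv in Hr; lra. }
  assert (NE2 : exists r, S2 r) by eauto.
  assert (NN1 : exists r, S1 (- r)) by (destruct Hne1 as [r Hr]; exists (- r); rewrite Ropp_involutive; auto).
  assert (NN2 : exists r, S2 (- r)) by (exists (- p0); rewrite Ropp_involutive; auto).
  destruct (rsup_spec S1 B1 Hne1) as [U1 L1].
  destruct (rsup_spec S2 B2 NE2) as [U2 L2].
  destruct (rsup_spec _ BN1 NN1) as [V1 W1].
  destruct (rsup_spec _ BN2 NN2) as [V2 W2].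
  unfold hull_length, Rinf.
  assert (Rsup S1 <= Rsup S2) by (apply L1; intros r Hr; apply U2; auto).
  assert (- p0 <= Rsup (fun r => S2 (- r))) by (apply V2; simpl; rewrite Ropp_involutive; auto).
  assert (Rsup (fun r => S1 (- r)) <= - (p0 + k)).
  { apply W1. intros r Hr. apply Hlow in Hr. lra. }
  lra.
Qed.

Theorem mainTheorem15 (X : Type) (d : X -> X -> R) (Omega : X -> Prop) (m : nat)
  (l : option R) (xi : R -> X) (tau sigma : R) (bargamma : nat -> X) :
  complete_CAT0 d ->
  bounded_set d Omega ->
  cond_TB d Omega m ->
  self_contracted d l xi ->
  (forall t, in_dom l t -> Omega (xi t)) ->
  in_dom l tau ->
  is_dir d (xi tau) bargamma ->
  (forall t, tau < t -> in_dom l t -> xi t <> xi tau ->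
     dangle d (xi tau) bargamma (fun _ => xi t) <= acos (3 * / (6 * INR m))) ->
  0 < sigma ->
  forall (T : R) (x : X) (gamma : nat -> X),
    tau < T -> in_dom l T ->
    (0 < d (xi tau) x < sigma /\
     dangle d (xi tau) (fun _ => x) bargamma >= PI - 2 * asin (/ (6 * INR m) / 2)) ->
    is_dir d x gamma ->
    dangle d x (fun _ => xi tau) gamma <= 2 * asin (/ (6 * INR m) / 2) ->
    Pi_length d x gamma (Xi_set l xi T)
      <= Pi_length d x gamma (Xi_set l xi tau) - / (6 * INR m) / 2 * d (xi tau) (xi T).
Proof.
  intros HC Hbd HTB Hsc HOm Htau Hbg Hbgh Hsig T x gamma HT HTd [[Hox Hxs] Hxang] Hgam Hgamh.
  destruct HC as [Hm [Hg [Hc _]]].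
  assert (Hm1 : (1 <= m)%nat).
  { apply (HTB (xi tau) (HOm tau Htau) 1%nat (fun _ => fun _ => x)).
    - intros i Hi. apply dir_const; auto.
    - intros i j Hi Hj Hij. exfalso. lia. }
  assert (HmR : 1 <= INR m) by (replace 1 with (INR 1) by reflexivity; apply le_INR; auto).
  set (e := / (6 * INR m)) in *.
  assert (He : 0 < e <= 1/6).
  { assert (E : e * (6 * INR m) = 1) by (unfold e; field; lra).
    assert (0 < e) by (unfold e; apply Rinv_0_lt_compat; lra). split; auto. nra. }
  set (o := xi tau) in *.
  destruct Hbd as [B HB].
  set (K := d x o + B).
  assert (HBo : 0 <= B) by (pose proof (HB o o (HOm tau Htau) (HOm tau Htau)); rewrite d_xx in H; auto).
  unfold Pi_length.
  apply (hull_step _ _ K (Pproj d x gamma o)).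
  - intros r [y [[s [Hs1 [Hs2 Hs3]]] Hr]]. exists y. split; auto. exists s. split; [lra | split; auto].
  - exists (Pproj d x gamma (xi T)). exists (xi T). split; auto. exists T. split; [lra | split; auto].
  - exists o. split; auto. exists tau. split; [lra | split; auto].
  - intros r [y [[s [Hs1 [Hs2 Hs3]]] Hr]]. subst r.
    assert (Hdy : d x y <= K).
    { unfold K. pose proof (d_tri X d Hm x o y). subst y.
      pose proof (HB o (xi s) (HOm tau Htau) (HOm s Hs2)). lra. }
    unfold Pproj. destruct (excluded_middle_informative (y = x)).
    + rewrite Rabs_R0. pose proof (d_nonneg X d Hm x o). unfold K. lra.
    + rewrite Rabs_mult. pose proof (COS_bound (dangle d x gamma (fun _ => y))).
      rewrite (Rabs_right (d x y)) by (apply Rle_ge, d_nonneg; auto).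
      assert (Rabs (cos (dangle d x gamma (fun _ => y))) <= 1) by (apply Rabs_le; lra).
      pose proof (d_nonneg X d Hm x y). nra.
  - intros r [y [[s [Hs1 [Hs2 Hs3]]] Hr]]. subst r y.
    apply (key X d Hm Hg Hc l xi tau bargamma T x gamma e); auto.
Qed.
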